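(* Let $\mathcal B$ be an extriangulated category with enough projectives and enough injectives, and let $(\mathcal C,\mathcal C^{\perp_1})$ be a cotorsion pair with $\mathcal C$ rigid, with heart $\mathcal H/\mathcal C$. Let $g:A\twoheadrightarrow B$ be a deflation with $A,B\in\mathcal H$ such that $\overline g$ is an epimorphism in $\mathcal H/\mathcal C$. Then for every $X\in\Omega\mathcal C$ the map $\operatorname{Hom}_{\mathcal B}(X,g):\operatorname{Hom}_{\mathcal B}(X,A)\to\operatorname{Hom}_{\mathcal B}(X,B)$ is surjective.
   Context: $(\mathcal B,\mathbb E,\mathfrak s)$ is an extriangulated category (Nakaoka–Palu); conflations $A\rightarrowtail B\twoheadrightarrow C$. Subcategories are full, additive, closed under isomorphisms and finite direct sums. $\mathcal P$ = projectives; $\mathcal C^{\perp_1}=\{B\mid\mathbb E(\mathcal C,B)=0\}$; $\mathcal C$ rigid means $\mathbb E(\mathcal C,\mathcal C)=0$. $\Omega\mathcal C$ is the class of objects $U$ admitting a conflation $U\rightarrowtail P\twoheadrightarrow C$ with $P\in\mathcal P$, $C\in\mathcal C$. For a cotorsion pair $(\mathcal U,\mathcal V)$ (summand-closed, $\mathbb E(\mathcal U,\mathcal V)=0$, every $B$ admits conflations $V_B\rightarrowtail U_B\twoheadrightarrow B$, $B\rightarrowtail V^B\twoheadrightarrow U^B$ with $U$'s in $\mathcal U$, $V$'s in $\mathcal V$), $\mathcal H$ is the subcategory of objects admitting such conflations with $U_B,V^B\in\mathcal U\cap\mathcal V$, and the heart is the ideal quotient $\mathcal H/(\mathcal U\cap\mathcal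 V)$, which is abelian; here $\mathcal U\cap\mathcal V=\mathcal C$. $\overline g$ is the image of $g$ in the heart. *)

(* Defs.v *)
From HB Require Import structures.
From mathcomp Require Import all_boot all_algebra.
Set Implicit Arguments. Unset Strict Implicit. Unset Printing Implicit Defensive.
Import GRing.Theory.
Local Open Scope ring_scope.

Record Cat := {
  Obj :> Type;
  Mor : Obj -> Obj -> zmodType;
  idm : forall A : Obj, Mor A A;
  mcomp : forall A B C : Obj, Mor B C -> Mor A B -> Mor A C
}.
Arguments Mor {c} : rename.
Arguments idm {c} A : rename.
Arguments mcomp {c A B C} : rename.
Notation "g ∘ f" := (mcomp g f) (at level 40, left associativity).

Definition is_iso (B : Cat) (X Y : B) (f : Mor X Y) : Prop :=
  exists g : Mor Y X, g ∘ f = idm X /\ f ∘ g = idm Y.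

Definition is_biprod (B : Cat) (A1 A2 S : B)
  (i1 : Mor A1 S) (i2 : Mor A2 S) (p1 : Mor S A1) (p2 : Mor S A2) : Prop :=
  [/\ p1 ∘ i1 = idm A1, p2 ∘ i2 = idm A2, p2 ∘ i1 = 0, p1 ∘ i2 = 0
    & i1 ∘ p1 + i2 ∘ p2 = idm S].

Record additive (B : Cat) : Prop := {
  comp_assoc : forall (A1 A2 A3 A4 : B) (h : Mor A3 A4) (g : Mor A2 A3)
      (f : Mor A1 A2), h ∘ (g ∘ f) = (h ∘ g) ∘ f;
  comp_idl : forall (A1 A2 : B) (f : Mor A1 A2), idm A2 ∘ f = f;
  comp_idr : forall (A1 A2 : B) (f : Mor A1 A2), f ∘ idm A1 = f;
  comp_addl : forall (A1 A2 A3 : B) (g g' : Mor A2 A3) (f : Mor A1 A2),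
      (g + g') ∘ f = g ∘ f + g' ∘ f;
  comp_addr : forall (A1 A2 A3 : B) (g : Mor A2 A3) (f f' : Mor A1 A2),
      g ∘ (f + f') = g ∘ f + g ∘ f';
  zero_object : exists Z : B, idm Z = 0;
  biprod_exists : forall A1 A2 : B, exists (S : B) (i1 : Mor A1 S)
      (i2 : Mor A2 S) (p1 : Mor S A1) (p2 : Mor S A2), is_biprod i1 i2 p1 p2
}.

(* E C A = E(C,A);  push a = a_* ;  pull c = c^* ;                         *)
(* realizes d x y  <->  s(d) = [A --x--> M --y--> C]                           *)
Record ExtriData (B : Cat) := {
  Ex : B -> B -> zmodType;
  push : forall (C A A' : B), Mor A A' -> Ex C A -> Ex C A';
  pull : forall (C' C A : B), Mor C' C -> Ex C A -> Ex C' A;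
  realizes : forall (C A : B), Ex C A -> forall M : B, Mor A M -> Mor M C -> Prop
}.
Arguments Ex {B} e : rename.
Arguments push {B} e {C A A'} : rename.
Arguments pull {B} e {C' C A} : rename.
Arguments realizes {B} e {C A} d {M} : rename.

Record extriangulated (B : Cat) (e : ExtriData B) : Prop := {
  ext_additive : additive B;
  (* (ET1)+(ET2): E is a biadditive functor B^op x B -> Ab *)
  push_addE : forall (C A A' : B) (a : Mor A A') (d d' : Ex e C A),
      push e a (d + d') = push e a d + push e a d';
  push_addM : forall (C A A' : B) (a a' : Mor A A') (d : Ex e C A),
      push e (a + a') d = push e a d + push e a' d;
  push_id : forall (C A : B) (d : Ex e C A), push e (idm A) d = d;
  push_comp : forall (C A A' A'' : B) (a : Mor A A') (a' : Mor A' A'')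
      (d : Ex e C A), push e (a' ∘ a) d = push e a' (push e a d);
  pull_addE : forall (C' C A : B) (c : Mor C' C) (d d' : Ex e C A),
      pull e c (d + d') = pull e c d + pull e c d';
  pull_addM : forall (C' C A : B) (c c' : Mor C' C) (d : Ex e C A),
      pull e (c + c') d = pull e c d + pull e c' d;
  pull_id : forall (C A : B) (d : Ex e C A), pull e (idm C) d = d;
  pull_comp : forall (C'' C' C A : B) (c : Mor C' C) (c' : Mor C'' C')
      (d : Ex e C A), pull e (c ∘ c') d = pull e c' (pull e c d);
  push_pull : forall (C' C A A' : B) (a : Mor A A') (c : Mor C' C)
      (d : Ex e C A), push e a (pull e c d) = pull e c (push e a d);
  (* s(d) is an equivalence class of sequences A -> M -> C *)
  real_exists : forall (C A : B) (d : Ex e C A),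
      exists (M : B) (x : Mor A M) (y : Mor M C), realizes e d x y;
  real_unique : forall (C A M M' : B) (d : Ex e C A) (x : Mor A M)
      (y : Mor M C) (x' : Mor A M') (y' : Mor M' C),
      realizes e d x y -> realizes e d x' y' ->
      exists b : Mor M M', [/\ is_iso b, b ∘ x = x' & y' ∘ b = y];
  real_iso : forall (C A M M' : B) (d : Ex e C A) (x : Mor A M)
      (y : Mor M C) (b : Mor M M') (y' : Mor M' C),
      realizes e d x y -> is_iso b -> y' ∘ b = y -> realizes e d (b ∘ x) y';
  real_morph : forall (C A M C' A' M' : B) (d : Ex e C A) (d' : Ex e C' A')
      (x : Mor A M) (y : Mor M C) (x' : Mor A' M') (y' : Mor M' C')
      (a : Mor A A') (c : Mor C C'),
      realizes e d x y -> realizes e d' x' y' -> push e a d = pull e c d' ->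
      exists b : Mor M M', b ∘ x = x' ∘ a /\ y' ∘ b = c ∘ y;
  real_zero : forall (A C S : B) (i1 : Mor A S) (i2 : Mor C S)
      (p1 : Mor S A) (p2 : Mor S C),
      is_biprod i1 i2 p1 p2 -> realizes e (0 : Ex e C A) i1 p2;
  real_sum : forall (C A M C' A' M' SA SM SC : B)
      (d : Ex e C A) (d' : Ex e C' A')
      (x : Mor A M) (y : Mor M C) (x' : Mor A' M') (y' : Mor M' C')
      (iA1 : Mor A SA) (iA2 : Mor A' SA) (pA1 : Mor SA A) (pA2 : Mor SA A')
      (iM1 : Mor M SM) (iM2 : Mor M' SM) (pM1 : Mor SM M) (pM2 : Mor SM M')
      (iC1 : Mor C SC) (iC2 : Mor C' SC) (pC1 : Mor SC C) (pC2 : Mor SC C'),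
      is_biprod iA1 iA2 pA1 pA2 -> is_biprod iM1 iM2 pM1 pM2 ->
      is_biprod iC1 iC2 pC1 pC2 ->
      realizes e d x y -> realizes e d' x' y' ->
      realizes e (push e iA1 (pull e pC1 d) + push e iA2 (pull e pC2 d'))
        (iM1 ∘ x ∘ pA1 + iM2 ∘ x' ∘ pA2) (iC1 ∘ y ∘ pM1 + iC2 ∘ y' ∘ pM2);
  ET3 : forall (C A M C' A' M' : B) (d : Ex e C A) (d' : Ex e C' A')
      (x : Mor A M) (y : Mor M C) (x' : Mor A' M') (y' : Mor M' C')
      (a : Mor A A') (b : Mor M M'),
      realizes e d x y -> realizes e d' x' y' -> b ∘ x = x' ∘ a ->
      exists c : Mor C C', y' ∘ b = c ∘ y /\ push e a d = pull e c d';
  ET3op : forall (C A M C' A' M' : B) (d : Ex e C A) (d' : Ex e C' A')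
      (x : Mor A M) (y : Mor M C) (x' : Mor A' M') (y' : Mor M' C')
      (b : Mor M M') (c : Mor C C'),
      realizes e d x y -> realizes e d' x' y' -> y' ∘ b = c ∘ y ->
      exists a : Mor A A', b ∘ x = x' ∘ a /\ push e a d = pull e c d';
  ET4 : forall (A B0 D C F : B) (d : Ex e D A) (d' : Ex e F B0)
      (f : Mor A B0) (f' : Mor B0 D) (g : Mor B0 C) (g' : Mor C F),
      realizes e d f f' -> realizes e d' g g' ->
      exists (E : B) (d'' : Ex e E A) (h' : Mor C E) (k : Mor D E)
        (l : Mor E F),
      [/\ realizes e d'' (g ∘ f) h', realizes e (push e f' d') k l,
          pull e k d'' = d, push e f d'' = pull e l d'
        & h' ∘ g = k ∘ f' /\ l ∘ h' = g'];
  ET4op : forall (A B0 D C F : B) (d : Ex e A D) (d' : Ex e B0 F)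
      (f' : Mor D B0) (f : Mor B0 A) (g' : Mor F C) (g : Mor C B0),
      realizes e d f' f -> realizes e d' g' g ->
      exists (E : B) (d'' : Ex e A E) (h' : Mor E C) (k : Mor E D)
        (l : Mor F E),
      [/\ realizes e d'' h' (f ∘ g), realizes e (pull e f' d') l k,
          push e k d'' = d, pull e f d'' = push e l d'
        & g ∘ h' = f' ∘ k /\ h' ∘ l = g']
}.

Definition conflation (B : Cat) (e : ExtriData B) (A M C : B)
  (x : Mor A M) (y : Mor M C) : Prop :=
  exists d : Ex e C A, realizes e d x y.

Definition deflation (B : Cat) (e : ExtriData B) (M C : B) (y : Mor M C) : Prop :=
  exists (A : B) (x : Mor A M), conflation e x y.

Definition projective (B : Cat) (e : ExtriData B) (P : B) : Prop :=
  forall (A M C : B) (x : Mor A M) (y : Mor M C), conflation e x y ->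
  forall f : Mor P C, exists g : Mor P M, y ∘ g = f.

Definition injective (B : Cat) (e : ExtriData B) (I : B) : Prop :=
  forall (A M C : B) (x : Mor A M) (y : Mor M C), conflation e x y ->
  forall f : Mor A I, exists g : Mor M I, g ∘ x = f.

Definition enough_projectives (B : Cat) (e : ExtriData B) : Prop :=
  forall C : B, exists (A P : B) (x : Mor A P) (y : Mor P C),
    projective e P /\ conflation e x y.

Definition enough_injectives (B : Cat) (e : ExtriData B) : Prop :=
  forall A : B, exists (I C : B) (x : Mor A I) (y : Mor I C),
    injective e I /\ conflation e x y.

Definition subcategory (B : Cat) (U : B -> Prop) : Prop :=
  [/\ (forall (X Y : B) (f : Mor X Y), is_iso f -> U X -> U Y),
      (forall Z : B, idm Z = 0 -> U Z)
    & (forall (A1 A2 S : B) (i1 : Mor A1 S) (i2 : Mor A2 S) (p1 : Mor S A1)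
         (p2 : Mor S A2), is_biprod i1 i2 p1 p2 -> U A1 -> U A2 -> U S)].

Definition summand_closed (B : Cat) (U : B -> Prop) : Prop :=
  forall (A1 A2 S : B) (i1 : Mor A1 S) (i2 : Mor A2 S) (p1 : Mor S A1)
    (p2 : Mor S A2), is_biprod i1 i2 p1 p2 -> U S -> U A1.

Definition perp1 (B : Cat) (e : ExtriData B) (U : B -> Prop) (Y : B) : Prop :=
  forall X : B, U X -> forall d : Ex e X Y, d = 0.

Definition rigid (B : Cat) (e : ExtriData B) (U : B -> Prop) : Prop :=
  forall X Y : B, U X -> U Y -> forall d : Ex e X Y, d = 0.

Definition cotorsion_pair (B : Cat) (e : ExtriData B) (U V : B -> Prop) : Prop :=
  [/\ subcategory U /\ subcategory V, summand_closed U /\ summand_closed V,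
      (forall X Y : B, U X -> V Y -> forall d : Ex e X Y, d = 0),
      (forall X : B, exists (VX UX : B) (x : Mor VX UX) (y : Mor UX X),
          [/\ V VX, U UX & conflation e x y])
    & (forall X : B, exists (VX UX : B) (x : Mor X VX) (y : Mor VX UX),
          [/\ V VX, U UX & conflation e x y])].

Definition Omega (B : Cat) (e : ExtriData B) (U : B -> Prop) (X : B) : Prop :=
  exists (P C : B) (x : Mor X P) (y : Mor P C),
    [/\ projective e P, U C & conflation e x y].

Definition heartH (B : Cat) (e : ExtriData B) (U V : B -> Prop) (X : B) : Prop :=
  (exists (VX UX : B) (x : Mor VX UX) (y : Mor UX X),
      [/\ V VX, U UX /\ V UX & conflation e x y])
  /\ (exists (VX UX : B) (x : Mor X VX) (y : Mor VX UX),
      [/\ U VX /\ V VX, U UX & conflation e x y]).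

Definition factors_through (B : Cat) (W : B -> Prop) (X Y : B) (f : Mor X Y) : Prop :=
  exists (Z : B) (u : Mor X Z) (v : Mor Z Y), W Z /\ f = v ∘ u.

(* the image of g : A -> B0 (A, B0 in H) is an epimorphism in the ideal
   quotient H/(U ∩ V) *)
Definition heart_epi (B : Cat) (e : ExtriData B) (U V : B -> Prop)
  (A B0 : B) (g : Mor A B0) : Prop :=
  forall (Y : B) (h : Mor B0 Y), heartH e U V Y ->
    factors_through (fun Z => U Z /\ V Z) (h ∘ g) ->
    factors_through (fun Z => U Z /\ V Z) h.

(* Main.v *)
Require Import Defs.
From HB Require Import structures.
From mathcomp Require Import all_boot all_algebra.
Import GRing.Theory.
Local Open Scope ring_scope.

Lemma dbl0 (V : zmodType) (x : V) : x = x + x -> x = 0.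
Proof. move=> H; apply: (addrI x); by rewrite addr0 -H. Qed.

Lemma comp0r (B : Cat) (HE : Defs.additive B) (X Y Z : B) (g : Mor Y Z) :
  g ∘ (0 : Mor X Y) = 0.
Proof. apply: dbl0; by rewrite -comp_addr // addr0. Qed.

Lemma comp0l (B : Cat) (HE : Defs.additive B) (X Y Z : B) (f : Mor X Y) :
  (0 : Mor Y Z) ∘ f = 0.
Proof. apply: dbl0; by rewrite -comp_addl // addr0. Qed.

Lemma compBr (B : Cat) (HE : Defs.additive B) (X Y Z : B) (g : Mor Y Z) (f f' : Mor X Y) :
  g ∘ (f - f') = g ∘ f - g ∘ f'.
Proof.
apply: (addIr (g ∘ f')). by rewrite -comp_addr // subrK subrK.
Qed.

Section Ex.
Variables (B : Cat) (e : ExtriData B) (HE : extriangulated e).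

Lemma push0 (C A A' : B) (a : Mor A A') : push e a (0 : Ex e C A) = 0.
Proof. apply: dbl0; by rewrite -push_addE // addr0. Qed.

Lemma pull0 (C' C A : B) (c : Mor C' C) : pull e c (0 : Ex e C A) = 0.
Proof. apply: dbl0; by rewrite -pull_addE // addr0. Qed.

Lemma pushB (C A A' : B) (a a' : Mor A A') (d : Ex e C A) :
  push e (a - a') d = push e a d - push e a' d.
Proof. apply: (addIr (push e a' d)). by rewrite -push_addM // subrK subrK. Qed.

Let HA := ext_additive HE.

Lemma split_real (A C : B) : exists (S : B) (i1 : Mor A S) (i2 : Mor C S)
  (p1 : Mor S A) (p2 : Mor S C), is_biprod i1 i2 p1 p2 /\ realizes e (0 : Ex e C A) i1 p2.
Proof.
have [S [i1 [i2 [p1 [p2 Hb]]]]] := biprod_exists HA A C.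
exists S, i1, i2, p1, p2; split => //; exact (real_zero HE Hb).
Qed.

Lemma push_infl0 {A M C : B} {d : Ex e C A} {x : Mor A M} {y : Mor M C} :
  realizes e d x y -> push e x d = 0.
Proof.
move=> Hd.
have [S [i1 [i2 [p1 [p2 [Hb Hr]]]]]] := split_real M C.
have [c [_ ->]] := ET3 HE (a := x) (b := i1) Hd Hr erefl.
exact: pull0.
Qed.

Lemma extend {A M C T : B} {d : Ex e C A} {x : Mor A M} {y : Mor M C} (a : Mor A T) :
  realizes e d x y -> push e a d = 0 -> exists t : Mor M T, t ∘ x = a.
Proof.
move=> Hd Ha.
have [S [i1 [i2 [p1 [p2 [Hb Hr]]]]]] := split_real T C.
have Heq : push e a d = pull e (idm C) 0 by rewrite Ha pull_id.
have [b [Hbx _]] := real_morph HE Hd Hr Heq.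
exists (p1 ∘ b). case: Hb => H1 _ _ _ _.
by rewrite -comp_assoc // Hbx comp_assoc // H1 comp_idl.
Qed.

Lemma lift {A M C Z : B} {d : Ex e C A} {x : Mor A M} {y : Mor M C} (c : Mor Z C) :
  realizes e d x y -> pull e c d = 0 -> exists s : Mor Z M, y ∘ s = c.
Proof.
move=> Hd Hc.
have [S [i1 [i2 [p1 [p2 [Hb Hr]]]]]] := split_real A Z.
have Heq : push e (idm A) 0 = pull e c d by rewrite Hc push0.
have [b [_ Hyb]] := real_morph HE Hr Hd Heq.
exists (b ∘ i2). case: Hb => _ H2 _ _ _.
by rewrite comp_assoc // Hyb -comp_assoc // H2 comp_idr.
Qed.

Lemma EX1 {A M C Z : B} {d : Ex e C A} {x : Mor A M} {y : Mor M C} (d' : Ex e Z M) :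
  realizes e d x y -> push e y d' = 0 -> exists d0 : Ex e Z A, d' = push e x d0.
Proof.
move=> Hd Hy.
have [N [m [n Hr]]] := real_exists HE d'.
have [E [d'' [h' [k [l [_ Hkl _ Hpp _]]]]]] := ET4 HE Hd Hr.
rewrite Hy in Hkl.
have [s Hs] := lift (idm _) Hkl (pull0 _ _ _ _).
exists (pull e s d''). by rewrite push_pull // Hpp -pull_comp // Hs pull_id.
Qed.

Lemma EX2 {A M C Z : B} {d : Ex e C A} {x : Mor A M} {y : Mor M C} (d' : Ex e M Z) :
  realizes e d x y -> pull e x d' = 0 -> exists d0 : Ex e C Z, d' = pull e y d0.
Proof.
move=> Hd Hx.
have [N [m [n Hr]]] := real_exists HE d'.
have [E [d'' [h' [k [l [_ Hlk _ Hpp _]]]]]] := ET4op HE Hd Hr.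
rewrite Hx in Hlk.
have [r Hr'] := extend (idm _) Hlk (push0 _ _ _ _).
exists (push e r d''). by rewrite -push_pull // Hpp -push_comp // Hr' push_id.
Qed.

End Ex.
Arguments push0 {B e} HE {C A A'} a.
Arguments pull0 {B e} HE {C' C A} c.
Arguments pushB {B e} HE {C A A'} a a' d.
Arguments split_real {B e} HE A C.
Arguments push_infl0 {B e} HE {A M C d x y}.
Arguments extend {B e} HE {A M C T d x y} a.
Arguments lift {B e} HE {A M C Z d x y} c.
Arguments EX1 {B e} HE {A M C Z d x y} d'.
Arguments EX2 {B e} HE {A M C Z d x y} d'.

Lemma comp4 (B : Cat) (HA : Defs.additive B) (W X Y Z T : B)
  (f : Mor Y T) (a : Mor X Y) (b : Mor W X) (g : Mor Z W) :
  (f ∘ a) ∘ (b ∘ g) = f ∘ ((a ∘ b) ∘ g).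
Proof. by rewrite !comp_assoc. Qed.

Lemma inC (B : Cat) (e : ExtriData B) (HE : extriangulated e) (C : B -> Prop)
  (Hcot : cotorsion_pair e C (perp1 e C)) (N : B)
  (H : forall W, perp1 e C W -> forall d : Ex e N W, d = 0) : C N.
Proof.
have HA := ext_additive HE.
case: Hcot => _ [HsumC _] _ Happ _.
have [VX [UX [x [y [HV HU [d Hd]]]]]] := Happ N.
rewrite (H _ HV d) in Hd.
have [S [i1 [i2 [p1 [p2 [Hb Hr]]]]]] := split_real HE VX N.
have [phi [[psi [Hpp Hpp']] Hx Hy]] := real_unique HE Hr Hd.
case: Hb => H1 H2 H3 H4 H5.
apply: (HsumC _ _ _ (phi ∘ i2) (phi ∘ i1) (p2 ∘ psi) (p1 ∘ psi)) HU.
split.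
- by rewrite comp4 // Hpp comp_idl // H2.
- by rewrite comp4 // Hpp comp_idl // H1.
- by rewrite comp4 // Hpp comp_idl // H3.
- by rewrite comp4 // Hpp comp_idl // H4.
- rewrite !comp_assoc // -!comp_addl // -!(comp_assoc HA phi) // -comp_addr //.
  by rewrite addrC H5 comp_idr // Hpp'.
Qed.

Theorem mainTheorem7 (B : Cat) (e : ExtriData B) (HB : extriangulated e)
  (Hproj : enough_projectives e) (Hinj : enough_injectives e)
  (C : B -> Prop) (HCsub : subcategory C) (Hrig : rigid e C)
  (Hcot : cotorsion_pair e C (perp1 e C))
  (A B0 : B) (g : Mor A B0) (Hg : deflation e g)
  (HA : heartH e C (perp1 e C) A) (HB0 : heartH e C (perp1 e C) B0)
  (Hepi : heart_epi e C (perp1 e C) g) :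
  forall X : B, Omega e C X ->
  forall h : Mor X B0, exists f : Mor X A, g ∘ f = h.
Proof.
move: HB => HE.
have HAd := ext_additive HE.
have perp : forall Z, C Z -> perp1 e C Z by move=> Z HZ X HX d; exact: Hrig.
have Hcot' := Hcot.
case: Hcot => _ _ _ Happ1 _.
case: HB0 => _ [C1 [C2 [i [j [[HC1 _] HC2 [eta0 Heta0]]]]]].
case: HA => _ [C1' [C2' [i' [j' [[HC1' _] HC2' [eta0' Heta0']]]]]].
move=> X [P [C0 [p [q [HP HC0 [eps Heps]]]]]] h.
case: Hg => K [x [delta Hdelta]].
pose theta := push e g eta0'.
have [Y [k [l Htheta]]] := real_exists HE theta.
have Hkg : factors_through (fun Z => C Z /\ perp1 e C Z) (k ∘ g).
  have Heq : push e g eta0' = pull e (idm _) theta by rewrite pull_id.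
  have [b [Hb _]] := real_morph HE Heta0' Htheta Heq.
  exists C1', i', b; split; first by split => //; exact: perp.
  by rewrite Hb.
have HY : heartH e C (perp1 e C) Y.
  split.
  - have [VY [UY [a [b [HVY HUY Hc]]]]] := Happ1 Y.
    exists VY, UY, a, b; split => //; split => //; exact: perp.
  - have [N [m [n Hmn]]] := real_exists HE (push e k eta0).
    have Hmk0 : push e (m ∘ k) eta0 = 0 by rewrite push_comp // (push_infl0 HE Hmn).
    have [t Ht] := extend HE (m ∘ k) Heta0 Hmk0.
    have HVN : perp1 e C N.
      move=> Z HZ d.
      have [d1 ->] := EX1 HE d Hmn (Hrig _ _ HZ HC2 _).
      have [d2 ->] := EX1 HE d1 Htheta (Hrig _ _ HZ HC2' _).
      by rewrite -push_comp // -Ht push_comp // (Hrig _ _ HZ HC1 (push e i d2)) (push0 HE).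
    have HCN : C N.
      apply: (@inC _ _ HE _ Hcot').
      move=> W HW d.
      have H1 : pull e k (pull e m d) = 0.
        by rewrite -pull_comp // -Ht pull_comp // (HW _ HC1 (pull e t d)) (pull0 HE).
      have [d0 Hd0] := EX2 HE (pull e m d) Htheta H1.
      rewrite (HW _ HC2' d0) (pull0 HE) in Hd0.
      have [d0' ->] := EX2 HE d Hmn Hd0.
      by rewrite (HW _ HC2 d0') (pull0 HE).
    exists N, C2, m, n; split => //; by exists (push e k eta0).
have [Z' [u [v [[HZ' _] Hk]]]] := Hepi Y k HY Hkg.
have [u' Hu'] := extend HE u Heta0 (Hrig _ _ HC2 HZ' _).
have Hb : (v ∘ u') ∘ i = k ∘ idm B0 by rewrite comp_idr // -comp_assoc // Hu' Hk.
have [c [_ Hc]] := ET3 HE Heta0 Htheta Hb.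
rewrite push_id // in Hc.
have [u0 Hu0] := extend HE (i ∘ h) Heps (Hrig _ _ HC0 HC1 _).
have [w [_ Hw]] := ET3 HE Heps Heta0 Hu0.
pose eta' := pull e w (pull e c eta0').
have Hh : push e h eps = push e g eta'.
  by rewrite Hw Hc /theta /eta' -!push_pull.
have [M' [x' [y' Heta']]] := real_exists HE eta'.
have [b0 Hb0] := HP _ _ _ x' y' (ex_intro _ eta' Heta') q.
have Hb0' : y' ∘ b0 = idm C0 ∘ q by rewrite comp_idl.
have [h' [_ Hh']] := ET3op HE Heps Heta' Hb0'.
rewrite pull_id // in Hh'.
have Hz : push e (h - g ∘ h') eps = 0.
  by rewrite (pushB HE) // push_comp // Hh' Hh subrr.
have [t0 Ht0] := extend HE _ Heps Hz.
have [t1 Ht1] := HP _ _ _ x g (ex_intro _ delta Hdelta) t0.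
exists (h' + t1 ∘ p).
by rewrite comp_addr // comp_assoc // Ht1 Ht0 addrC subrK.
Qed.
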